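(* Let $a>0$, $\beta>0$, let $\lambda$ be feasible, let $0<\xi<a$, let $\rho\in\mathcal{P}$, and suppose $d_0\ge\tau(\beta)a$. Then $\lim_{\delta\to0^+}T_4=0$, where \[ T_4=9C_5\,\delta^{-1/2}(2\delta+\lambda\delta^{\beta})^{-3/2}(\lambda^2\delta^{2\beta}+4)\int_{k_0(\delta)}^{\infty}\mathrm{e}^{-2k(d_0-\frac32a)}\mathrm{e}^{-4ka}\left(\frac{\mathrm{e}^{2k\xi}-1}{k}\right)\mathrm{d}k,\qquad C_5=\frac{(d_1-d_0)\|\rho\|^2_{L^2(\mathcal{M})}}{9\pi}. \]
   Context: For $0<\delta<1$ and constants $\beta>0$, $\lambda\in\mathbb{R}$, put $\mu=\delta+\lambda\delta^{\beta}$. The constant $\lambda$ is feasible if $\lambda>0$ when $0<\beta<1$, $\lambda\ge-1$ when $\beta=1$, $\lambda\ne0$ when $\beta>1$; $\delta_\mu\in(0,1)$ is a number with $\mu\ge0$ for $0<\delta\le\delta_\mu$. $k_0(\delta)=\frac{1}{2a}\ln\left(\frac{1}{2\delta^2+\lambda\delta^{\beta+1}}\right)$, and $\delta$ ranges over $0<\delta\le\delta_0$, where $0<\delta_0\le\delta_\mu$ is such that $k_0(\delta)>0$ for $0<\delta\le\delta_0$. $\tau(\beta)=\frac{\beta+2}{\beta+1}$ for $0<\beta<1$ and $\tau(\beta)=\frac32$ for $\beta\ge1$. Let $\mathcal{M}=\{(x,y):x>a\}$; $\mathcal{P}$ is the set of real-valued $\rho\in L^2(\mathcal{M})\cap L^\infty(\mathcal{M})$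 with compact support in $\mathcal{M}$, $0<|\operatorname{supp}\rho|<\infty$, and $\int\!\!\int\rho=0$; $d_0=\min\{x:(x,y)\in\operatorname{supp}\rho\}$, $d_1=\max\{x:(x,y)\in\operatorname{supp}\rho\}$. *)

(* Defs.v *)
From HB Require Import structures.
From mathcomp Require Import all_boot all_order all_algebra.
From mathcomp Require Import all_classical all_reals all_analysis.
Set Implicit Arguments. Unset Strict Implicit. Unset Printing Implicit Defensive.
Import Order.TTheory GRing.Theory Num.Theory.
Import numFieldNormedType.Exports.
Local Open Scope classical_set_scope.
Local Open Scope ring_scope.

Section defs.
Variable R : realType.

Definition leb2 := (@lebesgue_measure R \x @lebesgue_measure R)%E.

Definition feasible (beta lambda : R) : Prop :=
  (0 < beta < 1 -> 0 < lambda) /\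
  (beta = 1 -> -1 <= lambda) /\
  (1 < beta -> lambda <> 0).

Definition tau (beta : R) : R :=
  if beta < 1 then (beta + 2) / (beta + 1) else 3 / 2.

Definition halfM (a : R) : set (R * R) := [set p | a < p.1].

Definition supp (rho : R * R -> R) : set (R * R) :=
  closure [set p | rho p != 0].

Definition classP (a : R) (rho : R * R -> R) : Prop :=
  [/\ measurable_fun (halfM a) rho,
      (\int[leb2]_(p in halfM a) ((rho p) ^+ 2)%:E < +oo)%E,
      (exists M : R, leb2 [set p | halfM a p /\ M < `|rho p|] = 0%E),
      (compact (supp rho) /\ supp rho `<=` halfM a) &
      [/\ (0 < leb2 (supp rho))%E, (leb2 (supp rho) < +oo)%E &
       (\int[leb2]_(p in halfM a) (rho p)%:E = 0)%E]].

Definition is_d0 (rho : R * R -> R) (d0 : R) : Prop :=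
  (exists y, supp rho (d0, y)) /\ forall p, supp rho p -> d0 <= p.1.
Definition is_d1 (rho : R * R -> R) (d1 : R) : Prop :=
  (exists y, supp rho (d1, y)) /\ forall p, supp rho p -> p.1 <= d1.

Definition L2sq (a : R) (rho : R * R -> R) : R :=
  fine (\int[leb2]_(p in halfM a) ((rho p) ^+ 2)%:E)%E.

Definition C5 (a d0 d1 : R) (rho : R * R -> R) : R :=
  (d1 - d0) * L2sq a rho / (9 * pi).

Definition k0 (a beta lambda delta : R) : R :=
  (2 * a)^-1 * ln ((2 * delta ^+ 2 + lambda * delta `^ (beta + 1))^-1).

Definition T4 (a beta lambda xi d0 d1 : R) (rho : R * R -> R) (delta : R) : \bar R :=
  ((9 * C5 a d0 d1 rho * delta `^ (- (1/2)) *
     (2 * delta + lambda * delta `^ beta) `^ (- (3/2)) *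
     (lambda ^+ 2 * delta `^ (2 * beta) + 4))%:E *
   \int[@lebesgue_measure R]_(k in `[k0 a beta lambda delta, +oo[)
      (expR (- (2 * k * (d0 - 3/2 * a))) * expR (- (4 * k * a)) *
       ((expR (2 * k * xi) - 1) / k))%:E)%E.
End defs.

(* Main.v *)
Require Import Defs.
From HB Require Import structures.
From mathcomp Require Import all_boot all_order all_algebra.
From mathcomp Require Import all_classical all_reals all_analysis.
From mathcomp Require Import measurable_realfun.
From mathcomp Require Import ring lra.
Import Order.TTheory GRing.Theory Num.Theory.
Import numFieldNormedType.Exports.
Local Open Scope classical_set_scope.
Local Open Scope ring_scope.

Lemma expRm1_le (R : realType) (x : R) : expR x - 1 <= x * expR x.
Proof.
have h := expR_ge1Dx (- x); rewrite expRN in h.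
have e0 := expR_gt0 x.
have : (1 - x) * expR x <= (expR x)^-1 * expR x by rewrite ler_pM2r.
rewrite mulVf ?gt_eqF // mulrBl mul1r => h2. lra.
Qed.

Lemma integrand_bound (R : realType) (a xi d0 k0 k : R) :
  0 < xi -> xi < a -> 3/2 * a <= d0 -> 0 <= k0 -> k0 <= k ->
  0 <= expR (- (2 * k * (d0 - 3/2 * a))) * expR (- (4 * k * a)) *
       ((expR (2 * k * xi) - 1) / k) /\
  expR (- (2 * k * (d0 - 3/2 * a))) * expR (- (4 * k * a)) *
       ((expR (2 * k * xi) - 1) / k) <=
  (2 * xi / (a - xi) * expR (- (2 * d0 - xi) * k0)) * ((a - xi) * expR (- (a - xi) * k)).
Proof.
move=> xi0 xia ad0 k00 k0k.
have axi : 0 < a - xi by lra.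
have rhs0 : 0 <= (2 * xi / (a - xi) * expR (- (2 * d0 - xi) * k0)) * ((a - xi) * expR (- (a - xi) * k)).
  by rewrite !mulr_ge0 ?expR_ge0 ?invr_ge0 // ltW.
have [->|kn0] := eqVneq k 0.
  by rewrite invr0 !mulr0; split => //; rewrite !mulr_ge0 ?expR_ge0 ?invr_ge0 // ltW.
have k0' : 0 < k by rewrite lt_neqAle eq_sym kn0 /=; lra.
have e1 : 1 <= expR (2 * k * xi).
  have := expR_ge1Dx (2 * k * xi). have : 0 <= 2 * k * xi by rewrite !mulr_ge0 // ltW. lra.
split.
  by rewrite !mulr_ge0 ?expR_ge0 ?invr_ge0 // ?subr_ge0 // ltW.
have h1 : (expR (2 * k * xi) - 1) / k <= 2 * xi * expR (2 * k * xi).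
  rewrite ler_pdivrMr //.
  have := @expRm1_le _ (2 * k * xi).
  have -> : 2 * xi * expR (2 * k * xi) * k = 2 * k * xi * expR (2 * k * xi) by rewrite mulrC !mulrA (mulrC k).
  done.
apply: (le_trans (y := expR (- (2 * k * (d0 - 3/2 * a))) * expR (- (4 * k * a)) * (2 * xi * expR (2 * k * xi)))).
  by rewrite ler_wpM2l // mulr_ge0 ?expR_ge0.
have -> : expR (- (2 * k * (d0 - 3/2 * a))) * expR (- (4 * k * a)) * (2 * xi * expR (2 * k * xi))
   = 2 * xi * expR (- (2 * k * (d0 - 3/2 * a)) + - (4 * k * a) + 2 * k * xi).
  by rewrite !expRD; ring.
have -> : 2 * xi / (a - xi) * expR (- (2 * d0 - xi) * k0) * ((a - xi) * expR (- (a - xi) * k))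
   = 2 * xi * expR (- (2 * d0 - xi) * k0 + - (a - xi) * k).
  rewrite expRD; field; rewrite gt_eqF //.
rewrite ler_pM2l ?mulr_gt0 // ler_expR; nra.
Qed.

Lemma meas_g (R : realType) (a xi d0 : R) :
  measurable_fun (`]0, +oo[%classic : set R) (fun k : R => expR (- (2 * k * (d0 - 3/2 * a))) * expR (- (4 * k * a)) *
       ((expR (2 * k * xi) - 1) / k)).
Proof.
rewrite (_ : (fun k : R => _) = (fun k => expR ((- (2 * (d0 - 3/2 * a))) * k) * expR ((- (4 * a)) * k) *
       ((expR ((2 * xi) * k) - 1) * k^-1))); last first.
  by apply/funext => k; congr (expR _ * expR _ * ((expR _ - 1) * _)); ring.
apply: measurable_funM; [apply: measurable_funM|apply: measurable_funM].
- exact: measurableT_comp.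
- exact: measurableT_comp.
- apply: measurable_funB => //; exact: measurableT_comp.
- apply: open_continuous_measurable_fun; first exact: interval_open.
  move=> x; rewrite inE /= in_itv /= andbT => x0.
  by apply: inv_continuous; rewrite gt_eqF.
Qed.

Lemma int_bound (R : realType) (a xi d0 k0 : R) : 0 < xi -> xi < a -> 3/2 * a <= d0 -> 0 < k0 ->
  (0 <= \int[@lebesgue_measure R]_(k in `[k0, +oo[)
      (expR (- (2 * k * (d0 - 3/2 * a))) * expR (- (4 * k * a)) *
       ((expR (2 * k * xi) - 1) / k))%:E)%E /\
  (\int[@lebesgue_measure R]_(k in `[k0, +oo[)
      (expR (- (2 * k * (d0 - 3/2 * a))) * expR (- (4 * k * a)) *
       ((expR (2 * k * xi) - 1) / k))%:E <=
   (2 * xi / (a - xi) * expR (- (2 * d0 - xi) * k0))%:E)%E.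
Proof.
move=> xi0 xia ad0 k00.
have DS : (`[k0, +oo[%classic : set R) `<=` `]0, +oo[%classic.
  move=> x /=; rewrite !in_itv /= !andbT => h; lra.
have Dge : forall k, (`[k0, +oo[%classic : set R) k -> k0 <= k.
  by move=> k /=; rewrite in_itv /= andbT.
split.
  apply: integral_ge0 => k /Dge Dk; rewrite lee_fin.
  by case: (@integrand_bound R a xi d0 k0 k xi0 xia ad0 (ltW k00) Dk).
set K := 2 * xi / (a - xi) * expR (- (2 * d0 - xi) * k0).
have K0 : 0 <= K by rewrite !mulr_ge0 ?expR_ge0 ?invr_ge0 ?subr_ge0 // ltW.
have axi : 0 < a - xi by lra.
apply: (@le_trans _ _ (\int[@lebesgue_measure R]_(k in `[k0, +oo[) (K * exponential_pdf (a - xi) k)%:E)%E).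
  apply: ge0_le_integral => //.
  - move=> k /Dge Dk; rewrite lee_fin.
    by case: (@integrand_bound R a xi d0 k0 k xi0 xia ad0 (ltW k00) Dk).
  - apply/measurable_EFinP; apply: (measurable_funS _ DS) => //; exact: meas_g.
  - apply/measurable_EFinP; apply: measurable_funM => //.
    apply: (measurable_funS _ (@subsetT _ _)) => //; exact: measurable_exponential_pdf.
  - move=> k /Dge Dk; rewrite lee_fin exponential_pdfE; last lra.
    by case: (@integrand_bound R a xi d0 k0 k xi0 xia ad0 (ltW k00) Dk).
apply: (@le_trans _ _ (\int[@lebesgue_measure R]_k (K * exponential_pdf (a - xi) k)%:E)%E).
  apply: ge0_subset_integral => //.
  - apply/measurable_EFinP; apply: measurable_funM => //.
    exact: measurable_exponential_pdf.
  - by move=> k _; rewrite lee_fin mulr_ge0 // exponential_pdf_ge0 // ltW.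
under eq_integral do rewrite EFinM.
rewrite ge0_integralZl_EFin //.
- by rewrite integral_exponential_pdf // mule1.
- by move=> k _; rewrite lee_fin exponential_pdf_ge0 // ltW.
- apply/measurable_EFinP; exact: measurable_exponential_pdf.
Qed.
Lemma ln_bound (R : realType) (A B w : R) : 0 < A -> A <= w -> w <= B ->
  `|ln w| <= `|ln A| + `|ln B|.
Proof.
move=> A0 Aw wB.
have w0 : 0 < w by lra.
have B0 : 0 < B by lra.
have h1 : ln A <= ln w by rewrite ler_ln // posrE.
have h2 : ln w <= ln B by rewrite ler_ln // posrE.
have := ler_norm (ln B); have := ler_norm (- ln A); rewrite normrN.
have := normr_ge0 (ln A); have := normr_ge0 (ln B).
rewrite ler_norml; lra.
Qed.

Lemma eventually_small (R : realType) (q c : R) : 0 < q -> 0 < c ->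
  \forall d \near (0:R)^'+, d `^ q < c.
Proof.
move=> q0 c0; apply: (cvgr_lt 0) => //; exact: powR_cvg0.
Qed.

Lemma u_bounds (R : realType) (beta lambda : R) : 0 < beta -> feasible beta lambda ->
  exists gamma L : R, [/\ 0 < gamma, 1 + 3 * gamma <= (2 * tau beta - 1) * (1 + gamma) &
  \forall d \near (0:R)^'+, 0 < 2 * d + lambda * d `^ beta /\
     `|ln (2 * d + lambda * d `^ beta) - gamma * ln d| <= L].
Proof.
move=> b0 [f1 [f2 f3]].
have [b1|b1] := ltP beta 1.
- have l0 : 0 < lambda by apply: f1; rewrite b0.
  exists beta, (`|ln lambda| + `|ln (lambda + 1)|); split => //.
    rewrite /tau b1.
    have -> : (2 * ((beta + 2) / (beta + 1)) - 1) * (1 + beta) = beta + 3.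
      by field; rewrite gt_eqF //; lra.
    lra.
  have b10 : 0 < 1 - beta by lra.
  near=> d.
  have d0 : 0 < d by near: d; exact: nbhs_right_gt.
  have hs : d `^ (1 - beta) < 2^-1 by near: d; apply: eventually_small.
  have p0 : 0 < d `^ (1 - beta) by rewrite powR_gt0.
  have pb : 0 < d `^ beta by rewrite powR_gt0.
  have eq : 2 * d + lambda * d `^ beta = d `^ beta * (lambda + 2 * d `^ (1 - beta)).
    have -> : d `^ beta * (lambda + 2 * d `^ (1 - beta)) = lambda * d `^ beta + 2 * (d `^ beta * d `^ (1 - beta)) by ring.
    rewrite -powRD; last by apply/implyP => _; rewrite gt_eqF.
    have -> : beta + (1 - beta) = 1 by ring.
    by rewrite powRr1 ?ltW // addrC.
  have w0 : 0 < lambda + 2 * d `^ (1 - beta) by lra.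
  rewrite eq; split; first exact: mulr_gt0.
  rewrite lnM ?posrE // ln_powR addrC addKr.
  apply: ln_bound => //; lra.
- have [be1|bg1] := eqVneq beta 1.
  + subst beta.
    have l1 : -1 <= lambda by exact: f2.
    exists 1, (`|ln (2 + lambda)|); split => //.
      by rewrite /tau ltxx; lra.
    near=> d.
    have d0 : 0 < d by near: d; exact: nbhs_right_gt.
    have -> : 2 * d + lambda * d `^ 1 = (2 + lambda) * d by rewrite powRr1 ?ltW //; ring.
    have l2 : 0 < 2 + lambda by lra.
    split; first exact: mulr_gt0.
    by rewrite lnM ?posrE // mul1r addrK.
  + have bg : 1 < beta by rewrite lt_neqAle eq_sym bg1.
    have ln0 : lambda != 0 by apply/eqP; exact: f3.
    exists 1, (`|ln 1| + `|ln 3|); split => //.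
      by rewrite /tau ltNge (ltW bg) /=; lra.
    have bm : 0 < beta - 1 by lra.
    have la0 : 0 < (`|lambda| + 1)^-1 by rewrite invr_gt0; have := normr_ge0 lambda; lra.
    near=> d.
    have d0 : 0 < d by near: d; exact: nbhs_right_gt.
    have hs : d `^ (beta - 1) < (`|lambda| + 1)^-1 by near: d; apply: eventually_small.
    have p0 : 0 < d `^ (beta - 1) by rewrite powR_gt0.
    have hl : `|lambda| * d `^ (beta - 1) <= 1.
      have : d `^ (beta - 1) * (`|lambda| + 1) < 1.
        by rewrite -ltr_pdivlMr // ?div1r //; have := normr_ge0 lambda; lra.
      have := normr_ge0 lambda; nra.
    have hl2 : - (`|lambda| * d `^ (beta - 1)) <= lambda * d `^ (beta - 1) <= `|lambda| * d `^ (beta - 1).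
      have := ler_norm lambda; have := ler_norm (- lambda); rewrite normrN; nra.
    have eq : 2 * d + lambda * d `^ beta = d * (2 + lambda * d `^ (beta - 1)).
      have -> : d * (2 + lambda * d `^ (beta - 1)) = 2 * d + lambda * (d `^ 1 * d `^ (beta - 1)).
        by rewrite powRr1 ?ltW //; ring.
      rewrite -powRD; last by apply/implyP => _; rewrite gt_eqF.
      by have -> : 1 + (beta - 1) = beta by ring.
    have w0 : 0 < 2 + lambda * d `^ (beta - 1) by lra.
    rewrite eq; split; first exact: mulr_gt0.
    rewrite lnM ?posrE // mul1r addrC addKr.
    apply: ln_bound; lra.
Unshelve. all: end_near.
Qed.

Lemma key (R : realType) (c K L g s ld lu q : R) : 0 <= c -> 0 <= K -> 0 <= q <= 1 ->
  `|lu - g * ld| <= L ->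
  c * expR (- (1/2) * ld) * expR (- (3/2) * lu) * (q + 4) * (K * expR (s * (ld + lu))) <=
  c * 5 * K * expR (`|s - 3/2| * L) * expR ((s - 1/2 + (s - 3/2) * g) * ld).
Proof.
move=> c0 K0 /andP[q0 q1] hL.
have -> : c * expR (- (1/2) * ld) * expR (- (3/2) * lu) * (q + 4) * (K * expR (s * (ld + lu)))
  = (c * K) * (q + 4) * expR (- (1/2) * ld + - (3/2) * lu + s * (ld + lu)).
  by rewrite !expRD; ring.
have -> : c * 5 * K * expR (`|s - 3/2| * L) * expR ((s - 1/2 + (s - 3/2) * g) * ld)
  = (c * K) * 5 * expR (`|s - 3/2| * L + (s - 1/2 + (s - 3/2) * g) * ld).
  by rewrite !expRD; ring.
have cK : 0 <= c * K by exact: mulr_ge0.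
apply: ler_pM.
- by rewrite mulr_ge0 //; lra.
- exact: expR_ge0.
- by rewrite ler_wpM2l //; lra.
rewrite ler_expR.
have e : - (1/2) * ld + - (3/2) * lu + s * (ld + lu)
   = (s - 1/2 + (s - 3/2) * g) * ld + (s - 3/2) * (lu - g * ld) by ring.
rewrite e addrC lerD2r.
apply: (le_trans (ler_norm _)); rewrite normrM.
by rewrite ler_wpM2l.
Qed.

Lemma powRE_pos (R : realType) (x y : R) : 0 < x -> x `^ y = expR (y * ln x).
Proof. by move=> x0; rewrite /powR gt_eqF. Qed.

Theorem lemma5p5 (R : realType) (a beta lambda xi : R) (rho : R * R -> R) (d0 d1 : R) :
  0 < a -> 0 < beta -> feasible beta lambda -> 0 < xi < a ->
  classP a rho -> is_d0 rho d0 -> is_d1 rho d1 ->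
  tau beta * a <= d0 ->
  T4 a beta lambda xi d0 d1 rho delta @[delta --> 0^'+] --> 0%E.
Proof.
move=> a0 b0 feas /andP[xi0 xia] cP hd0 hd1 td0.
have tau32 : 3/2 <= tau beta.
  rewrite /tau; case: ifPn => [b1|_]; last by lra.
  by rewrite ler_pdivlMr; lra.
have ad0 : 3/2 * a <= d0 by nra.
have C50 : 0 <= C5 a d0 d1 rho.
  have d01 : d0 <= d1.
    by case: hd0 => [[y Sy] _]; case: hd1 => [_ H]; exact: (H _ Sy).
  have L0 : 0 <= L2sq a rho.
    by apply: fine_ge0; apply: integral_ge0 => p _; rewrite lee_fin sqr_ge0.
  rewrite /C5; apply: divr_ge0; apply: mulr_ge0 => //.
  - by rewrite subr_ge0.
  - exact: ltW (pi_gt0 _).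
have [g [L [g0 gcond hnear]]] := @u_bounds R beta lambda b0 feas.
pose s := (2 * d0 - xi) / (2 * a).
pose p := s - 1/2 + (s - 3/2) * g.
have st : tau beta - 1/2 < s.
  rewrite /s ltr_pdivlMr; last by lra.
  nra.
have p0 : 0 < p.
  rewrite /p; nra.
pose K := 2 * xi / (a - xi).
have K0 : 0 <= K by rewrite /K divr_ge0 ?subr_ge0 ?mulr_ge0 // ltW.
pose coef (delta : R) := 9 * C5 a d0 d1 rho * delta `^ (- (1/2)) *
     (2 * delta + lambda * delta `^ beta) `^ (- (3/2)) *
     (lambda ^+ 2 * delta `^ (2 * beta) + 4).
pose H (delta : R) := coef delta * (2 * xi / (a - xi) * expR (- (2 * d0 - xi) * k0 a beta lambda delta)).
pose M := 9 * C5 a d0 d1 rho * 5 * K * expR (`|s - 3/2| * L).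
have ev : \forall delta \near (0:R)^'+, 0 < delta /\
   0 < 2 * delta + lambda * delta `^ beta /\
   `|ln (2 * delta + lambda * delta `^ beta) - g * ln delta| <= L /\
   lambda ^+ 2 * delta `^ (2 * beta) <= 1 /\
   0 < k0 a beta lambda delta /\
   0 <= coef delta /\
   H delta <= M * delta `^ p.
  have l1 : 0 < (lambda ^+ 2 + 1)^-1 by rewrite invr_gt0; have := sqr_ge0 lambda; lra.
  have b2 : 0 < 2 * beta by lra.
  have eL : 0 < expR (- (L + 1) / (1 + g)) by exact: expR_gt0.
  near=> delta.
  have dp : 0 < delta by near: delta; exact: nbhs_right_gt.
  have [up hl] : 0 < 2 * delta + lambda * delta `^ beta /\
     `|ln (2 * delta + lambda * delta `^ beta) - g * ln delta| <= L.
    by near: delta; exact: hnear.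
  have hs : delta `^ (2 * beta) < (lambda ^+ 2 + 1)^-1.
    by near: delta; exact: (@eventually_small R _ _ b2 l1).
  have hq : lambda ^+ 2 * delta `^ (2 * beta) <= 1.
    have : delta `^ (2 * beta) * (lambda ^+ 2 + 1) < 1.
      by rewrite -ltr_pdivlMr ?div1r //; have := sqr_ge0 lambda; lra.
    have := sqr_ge0 lambda; have := powR_ge0 delta (2 * beta); nra.
  have hsmall : delta < expR (- (L + 1) / (1 + g)).
    by near: delta; exact: nbhs_right_lt eL.
  set u := 2 * delta + lambda * delta `^ beta in up hl *.
  have eqk : 2 * delta ^+ 2 + lambda * delta `^ (beta + 1) = delta * u.
    rewrite powRD; last by apply/implyP => _; rewrite gt_eqF.
    by rewrite powRr1 ?ltW // /u; ring.
  have k0E : k0 a beta lambda delta = (2 * a)^-1 * (- (ln delta + ln u)).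
    by rewrite /k0 eqk lnV ?posrE ?mulr_gt0 // lnM ?posrE.
  have hld : ln delta * (1 + g) < - (L + 1).
    rewrite -ltr_pdivlMr; last by lra.
    by rewrite -[X in _ < X]expRK ltr_ln ?posrE ?expR_gt0.
  have hlu : ln u <= g * ln delta + L.
    by move: hl; rewrite ler_norml => /andP[_]; lra.
  have c0 : 0 <= coef delta.
    rewrite /coef; apply: mulr_ge0; last first.
      by have := sqr_ge0 lambda; have := powR_ge0 delta (2 * beta); nra.
    apply: mulr_ge0; last exact: powR_ge0.
    apply: mulr_ge0; last exact: powR_ge0.
    by apply: mulr_ge0.
  do 4 (split => //).
  split.
    rewrite k0E; apply: mulr_gt0; first by rewrite invr_gt0 mulr_gt0.
    nra.
  split => //.
  rewrite /H /coef k0E /M.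
  rewrite (@powRE_pos _ delta (- (1/2))) // (@powRE_pos _ u (- (3/2))) //.
  rewrite (@powRE_pos _ delta p) //.
  have -> : - (2 * d0 - xi) * ((2 * a)^-1 * - (ln delta + ln u)) = s * (ln delta + ln u).
    by rewrite /s; ring.
  apply: key => //.
  - by rewrite mulr_ge0.
  by rewrite hq mulr_ge0 // ?sqr_ge0 ?powR_ge0.
apply: (@squeeze_cvge _ _ _ _ (fun=> 0%E) _ (fun delta => (H delta)%:E)).
- apply: filterS ev => delta [dp [up [hl [hq [k0p [c0 hH]]]]]].
  have [I0 IX] := @int_bound R a xi d0 (k0 a beta lambda delta) xi0 xia ad0 k0p.
  apply/andP; split.
    by apply: mule_ge0 => //; rewrite lee_fin.
  apply: le_trans (lee_wpmul2l _ IX) _; first by rewrite lee_fin.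
  by rewrite -EFinM.
- exact: cvg_cst.
apply: cvg_EFin; first by near=> x.
apply: (@squeeze_cvgr _ _ _ _ (fun=> 0) (fun d => M * d `^ p)).
- apply: filterS ev => delta [dp [up [hl [hq [k0p [c0 hH]]]]]] /=.
  apply/andP; split => //.
  by rewrite mulr_ge0 // mulr_ge0 // expR_ge0.
- exact: cvg_cst.
- have := cvgMl_tmp (a := M) (powR_cvg0 p0); rewrite mulr0; exact.
Unshelve. all: end_near.
Qed.
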